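(* Let $k_1,k_2,k_3,a_2,a_5$ be real constants with $(a_2,a_5)\neq(0,0)$, let $r=\sqrt{x^2+y^2}$, and consider the Newtonian system $\ddot x=-\partial_x V_3$, $\ddot y=-\partial_y V_3$ on the region of the plane where $r\neq0$ and $a_2y-a_5x\neq 0$, with potential $$V_3=\frac{k_1}{(a_2y-a_5x)^2}+\frac{k_2}{r}+\frac{k_3(a_2x+a_5y)}{r(a_2y-a_5x)^2}.$$ Then \begin{align*} J_3=&(x\dot y-y\dot x)^2(a_2\dot x+a_5\dot y)+\frac{2k_1r^2}{(a_2y-a_5x)^2}(a_2\dot x+a_5\dot y)-\frac{k_2(a_2y-a_5x)}{r}(x\dot y-y\dot x)\\ &+\frac{k_3r}{a_2y-a_5x}(a_2\dot y-a_5\dot x)-\frac{k_3(a_2x+a_5y)}{r(a_2y-a_5x)}(x\dot y-y\dot x)+\frac{2k_3(a_2x+a_5y)r}{(a_2y-a_5x)^2}(a_2\dot x+a_5\dot y) \end{align*} is constant along every solution. *)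

(* Defs.v *)
From Stdlib Require Import Reals.
From Coquelicot Require Import Coquelicot.
Open Scope R_scope.

Definition rad (x y : R) : R := sqrt (x ^ 2 + y ^ 2).

Definition V3 (k1 k2 k3 a2 a5 : R) (x y : R) : R :=
  k1 / (a2 * y - a5 * x) ^ 2 + k2 / rad x y
  + k3 * (a2 * x + a5 * y) / (rad x y * (a2 * y - a5 * x) ^ 2).

(* the first integral J_3 as a function of position (x,y) and velocity (vx,vy) *)
Definition J3 (k1 k2 k3 a2 a5 : R) (x y vx vy : R) : R :=
  let r := rad x y in
  let L := x * vy - y * vx in
  let w := a2 * y - a5 * x in
  let u := a2 * x + a5 * y in
  L ^ 2 * (a2 * vx + a5 * vy)
  + 2 * k1 * r ^ 2 / w ^ 2 * (a2 * vx + a5 * vy)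
  - k2 * w / r * L
  + k3 * r / w * (a2 * vy - a5 * vx)
  - k3 * u / (r * w) * L
  + 2 * k3 * u * r / w ^ 2 * (a2 * vx + a5 * vy).

(* Main.v *)
Require Import Defs.
From Stdlib Require Import Reals Lra Nsatz.
From Coquelicot Require Import Coquelicot.
Open Scope R_scope.

Lemma rad_pos x y : rad x y <> 0 -> 0 < x^2 + y^2.
Proof.
  unfold rad; intros H. destruct (Rle_or_lt (x^2+y^2) 0) as [h|h]; auto.
  exfalso; apply H. apply sqrt_neg_0; auto.
Qed.

Lemma dVx k1 k2 k3 a2 a5 x y : rad x y <> 0 -> a2*y - a5*x <> 0 ->
  Derive (fun u => V3 k1 k2 k3 a2 a5 u y) x =
  let r := rad x y in let w := a2*y - a5*x in let u := a2*x+a5*y in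
  2*k1*a5/w^3 - k2*x/(r*r^2) + k3*(a2/(r*w^2) - u*x/(r*r^2*w^2) + 2*u*a5/(r*w^3)).
Proof.
  intros Hr Hw. pose proof (rad_pos _ _ Hr) as Hp.
  apply is_derive_unique. unfold V3, rad in *. auto_derive.
  all: replace (x*(x*1)+y*(y*1)) with (x^2+y^2) by ring.
  - repeat split; auto; try apply Rmult_integral_contrapositive; try split; auto;
    replace (a2 * y + - (a5 * x)) with (a2*y - a5*x) by ring; auto; lra.
  - cbv zeta. set (r := sqrt _) in *. field. auto.
Qed.

Lemma dVy k1 k2 k3 a2 a5 x y : rad x y <> 0 -> a2*y - a5*x <> 0 ->
  Derive (fun u => V3 k1 k2 k3 a2 a5 x u) y =
  let r := rad x y in let w := a2*y - a5*x in let u := a2*x+a5*y in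
  - 2*k1*a2/w^3 - k2*y/(r*r^2) + k3*(a5/(r*w^2) - u*y/(r*r^2*w^2) - 2*u*a2/(r*w^3)).
Proof.
  intros Hr Hw. pose proof (rad_pos _ _ Hr) as Hp.
  apply is_derive_unique. unfold V3, rad in *. auto_derive.
  all: replace (x*(x*1)+y*(y*1)) with (x^2+y^2) by ring.
  - repeat split; auto; try apply Rmult_integral_contrapositive; try split; auto;
    replace (a2 * y + - (a5 * x)) with (a2*y - a5*x) by ring; auto; lra.
  - cbv zeta. set (r := sqrt _) in *. field. auto.
Qed.


Lemma dJ k1 k2 k3 a2 a5 (x y vx vy : R -> R) t :
  rad (x t) (y t) <> 0 -> a2 * y t - a5 * x t <> 0 ->
  is_derive x t (vx t) -> is_derive y t (vy t) ->
  is_derive vx t (- Derive (fun u => V3 k1 k2 k3 a2 a5 u (y t)) (x t)) ->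
  is_derive vy t (- Derive (fun u => V3 k1 k2 k3 a2 a5 (x t) u) (y t)) ->
  is_derive (fun s => J3 k1 k2 k3 a2 a5 (x s) (y s) (vx s) (vy s)) t 0.
Proof.
  intros Hr Hw Dx Dy Dvx Dvy.
  rewrite dVx in Dvx by auto. rewrite dVy in Dvy by auto.
  pose proof (rad_pos _ _ Hr) as Hp.
  unfold J3, rad in *. cbv zeta in *.
  auto_derive.
  2: {
  replace (Derive (fun x0 => x x0) t) with (vx t) by (symmetry; apply is_derive_unique; exact Dx).
  replace (Derive (fun x0 => y x0) t) with (vy t) by (symmetry; apply is_derive_unique; exact Dy).
  pose proof (is_derive_unique _ _ _ Dvx) as Ex.
  pose proof (is_derive_unique _ _ _ Dvy) as Ey.
  change (Derive (fun x0 => vx x0) t) with (Derive vx t).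
  change (Derive (fun x0 => vy x0) t) with (Derive vy t).
  rewrite Ex, Ey.
  replace (x t * (x t * 1) + y t * (y t * 1)) with (x t ^2 + y t ^2) by ring.
  assert (Hrr : sqrt (x t ^ 2 + y t ^ 2) * sqrt (x t ^ 2 + y t ^ 2) = x t ^2 + y t^2) by (apply sqrt_sqrt; lra).
  replace (a2 * y t + - (a5 * x t)) with (a2 * y t - a5 * x t) by ring.
  set (r := sqrt (x t ^ 2 + y t ^ 2)) in *.
  set (X := x t) in *. set (Y := y t) in *. set (U := vx t) in *. set (V := vy t) in *.
  clearbody r X Y U V. clear Dx Dy Dvx Dvy Ex Ey.
  field_simplify; auto.
  unfold Rdiv; apply Rmult_eq_0_compat_r.
  assert (E12 : r^12 = (X^2+Y^2)^6) by (rewrite <- Hrr; ring).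
  assert (E11 : r^11 = (X^2+Y^2)^5 * r) by (rewrite <- Hrr; ring).
  assert (E10 : r^10 = (X^2+Y^2)^5) by (rewrite <- Hrr; ring).
  assert (E9 : r^9 = (X^2+Y^2)^4 * r) by (rewrite <- Hrr; ring).
  assert (E8 : r^8 = (X^2+Y^2)^4) by (rewrite <- Hrr; ring).
  assert (E7 : r^7 = (X^2+Y^2)^3 * r) by (rewrite <- Hrr; ring).
  assert (E6 : r^6 = (X^2+Y^2)^3) by (rewrite <- Hrr; ring).
  assert (E5 : r^5 = (X^2+Y^2)^2 * r) by (rewrite <- Hrr; ring).
  assert (E4 : r^4 = (X^2+Y^2)^2) by (rewrite <- Hrr; ring).
  assert (E3 : r^3 = (X^2+Y^2)^1 * r) by (rewrite <- Hrr; ring).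
  assert (E2 : r^2 = (X^2+Y^2)^1) by (rewrite <- Hrr; ring).
  rewrite ?E12, ?E11, ?E10, ?E9, ?E8, ?E7, ?E6, ?E5, ?E4, ?E3, ?E2.
  ring.
  }
  replace (x t * (x t * 1) + y t * (y t * 1)) with (x t ^2 + y t ^2) by ring.
  replace (a2 * y t + - (a5 * x t)) with (a2 * y t - a5 * x t) by ring.
  repeat split; try (eexists; eassumption); try lra;
  repeat apply Rmult_integral_contrapositive_currified; auto; lra.
Qed.

Theorem mainTheorem6 (k1 k2 k3 a2 a5 : R) :
  (a2, a5) <> (0, 0) ->
  forall (a b : R) (x y vx vy : R -> R),
  (forall t, a < t < b ->
     rad (x t) (y t) <> 0 /\ a2 * y t - a5 * x t <> 0 /\
     is_derive x t (vx t) /\ is_derive y t (vy t) /\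
     is_derive vx t (- Derive (fun u => V3 k1 k2 k3 a2 a5 u (y t)) (x t)) /\
     is_derive vy t (- Derive (fun u => V3 k1 k2 k3 a2 a5 (x t) u) (y t))) ->
  forall t1 t2, a < t1 < b -> a < t2 < b ->
    J3 k1 k2 k3 a2 a5 (x t1) (y t1) (vx t1) (vy t1)
    = J3 k1 k2 k3 a2 a5 (x t2) (y t2) (vx t2) (vy t2).
Proof.
  intros _ a b x y vx vy H.
  assert (K : forall t1 t2, a < t1 < b -> a < t2 < b -> t1 < t2 ->
    J3 k1 k2 k3 a2 a5 (x t1) (y t1) (vx t1) (vy t1)
    = J3 k1 k2 k3 a2 a5 (x t2) (y t2) (vx t2) (vy t2)).
  { intros t1 t2 H1 H2 Hlt.
    apply (eq_is_derive (fun s => J3 k1 k2 k3 a2 a5 (x s) (y s) (vx s) (vy s))); auto.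
    intros t Ht. destruct (H t ltac:(lra)) as (A1 & A2 & A3 & A4 & A5 & A6).
    apply dJ; auto. }
  intros t1 t2 H1 H2.
  destruct (Rtotal_order t1 t2) as [h|[h|h]].
  - apply K; auto.
  - subst; reflexivity.
  - symmetry; apply K; auto.
Qed.
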